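(* Let $\Gamma$ be a typing environment, $u$ an identifier, $\vec T$ a tuple of types and $a_1,a_2$ attributes, and suppose the environment $\Gamma, u:[\vec T]^{a_1}, u:[\vec T]^{a_2}$ is consistent, i.e., it is derivable from some typing environment $\Gamma'$ that is a partial function by applying the structural rules. Then $\Gamma, u:[\vec T]^{a_1-1}, u:[\vec T]^{a_2-1}$ is derivable from the same environment $\Gamma'$ by applying the structural rules, and is therefore consistent.
   Context: Types: $T ::= [T_1,\dots,T_n]^{a} \mid \mathsf{Proc}$ (channel type carrying an $n$-tuple of values, with usage attribute $a$; and the type of process variables). Attributes: $a ::= \mathsf{aff}$ (affine) $\mid \mathsf{un}$ (unrestricted) $\mid \bullet_i$ (unique after $i$ steps, $i\in\mathbb N$). Identifiers $u,v$ range over channel names and variables; process variables $X$ are also given types. A typing environment is a finite multiset of assumptions $u:T$ (not a priori a partial function). Type splitting $T = T_1\circ T_2$ is given by: $[\vec T]^{\mathsf{un}} = [\vec T]^{\mathsf{un}}\circ[\vec T]^{\mathsf{un}}$; $\mathsf{Proc}=\mathsf{Proc}\circ\mathsf{Proc}$; $[\vec T]^{\bullet_i} = [\vec T]^{\mathsf{aff}}\circ[\vec T]^{\bullet_{i+1}}$ (nothing else splits). Subtyping is given by the rules $\bullet_i\le\bullet_{i+1}$, $\bullet_{i+1}\le\mathsf{un}$, $\mathsf{un}\le\mathsf{aff}$, and $[\vec T]^{a_1}\le[\vec T]^{a_2}$ whenever $a_1\le a_2$. The structural rules of the type system (for judgements $\Gamma\vdash P$) are: (Contraction) if $T=T_1\circ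 T_2$ and $\Gamma,u:T_1,u:T_2\vdash P$ then $\Gamma,u:T\vdash P$; (Weakening) if $\Gamma\vdash P$ then $\Gamma,u:T\vdash P$; (Subtyping) if $\Gamma,u:T_2\vdash P$ and $T_1\le T_2$ then $\Gamma,u:T_1\vdash P$; (Revision) if $\Gamma,u:[\vec T_2]^{\bullet_0}\vdash P$ then $\Gamma,u:[\vec T_1]^{\bullet_0}\vdash P$. An environment $\Delta$ is derivable from $\Gamma'$ by applying the structural rules if $\Delta$ arises from $\Gamma'$ by finitely many of the corresponding environment transformations (reading each rule from conclusion to premise): replacing $u:T$ by $u:T_1,u:T_2$ where $T=T_1\circ T_2$; removing an assumption; replacing $u:T_1$ by $u:T_2$ where $T_1\le T_2$; replacing $u:[\vec T_1]^{\bullet_0}$ by $u:[\vec T_2]^{\bullet_0}$. An environment is consistent if it is derivable in this way from an environment that is a partial function (at most one assumption per identifier). Usage decrement: for an environment $\Gamma$, $\Gamma, u:[\vec T]^{a-1}$ denotes $\Gamma$ if $a=\mathsf{aff}$; $\Gamma,u:[\vec T]^{\mathsf{un}}$ if $a=\mathsf{un}$; and $\Gamma,u:[\vec T]^{\bullet_i}$ if $a=\bullet_{i+1}$ (it is undefined for $a=\bullet_0$). *)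

(* Defs.v *)
From Stdlib Require Import List Permutation Relations.
Import ListNotations.

Inductive attr : Type :=
| Aff : attr
| Un : attr
| Bullet : nat -> attr.

Inductive ty : Type :=
| TChan : list ty -> attr -> ty
| TProc : ty.

Inductive tsplit : ty -> ty -> ty -> Prop :=
| split_un : forall Ts, tsplit (TChan Ts Un) (TChan Ts Un) (TChan Ts Un)
| split_proc : tsplit TProc TProc TProc
| split_bullet : forall Ts i,
    tsplit (TChan Ts (Bullet i)) (TChan Ts Aff) (TChan Ts (Bullet (S i))).

(* Generating rules of attribute subtyping (the structural rule may be
   applied repeatedly, so the reflexive-transitive closure is implicit). *)
Inductive attr_le : attr -> attr -> Prop :=
| le_bb : forall i, attr_le (Bullet i) (Bullet (S i))
| le_bun : forall i, attr_le (Bullet (S i)) Un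
| le_unaff : attr_le Un Aff.

Definition attr_sub : attr -> attr -> Prop := clos_refl_trans attr attr_le.

Inductive subty : ty -> ty -> Prop :=
| subty_chan : forall Ts a1 a2, attr_sub a1 a2 -> subty (TChan Ts a1) (TChan Ts a2).

(* Typing environments: finite multisets of assumptions, represented as lists
   considered up to permutation. *)
Definition env (I : Type) := list (I * ty).

(* One environment transformation (structural rule read conclusion->premise). *)
Inductive env_step {I : Type} : env I -> env I -> Prop :=
| es_perm : forall G D, Permutation G D -> env_step G D
| es_contr : forall G u T T1 T2, tsplit T T1 T2 ->
    env_step ((u, T) :: G) ((u, T1) :: (u, T2) :: G)
| es_weak : forall G u T, env_step ((u, T) :: G) G
| es_sub : forall G u T1 T2, subty T1 T2 ->
    env_step ((u, T1) :: G) ((u, T2) :: G)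
| es_rev : forall G u Ts1 Ts2,
    env_step ((u, TChan Ts1 (Bullet 0)) :: G) ((u, TChan Ts2 (Bullet 0)) :: G).

Definition derivable {I : Type} (G D : env I) : Prop :=
  clos_refl_trans (env I) env_step G D.

Definition partial_fun {I : Type} (G : env I) : Prop := NoDup (map fst G).

Definition consistent {I : Type} (D : env I) : Prop :=
  exists G, partial_fun G /\ derivable G D.

(* Usage decrement of an attribute: None = undefined (a = bullet_0);
   Some None = the assumption disappears (a = aff);
   Some (Some a') = the assumption becomes [T]^{a'}. *)
Definition attr_dec (a : attr) : option (option attr) :=
  match a with
  | Aff => Some None
  | Un => Some (Some Un)
  | Bullet 0 => None
  | Bullet (S i) => Some (Some (Bullet i))
  end.

Definition ext_dec {I : Type} (G : env I) (u : I) (Ts : list ty)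
  (o : option attr) : env I :=
  match o with
  | None => G
  | Some a => G ++ [(u, TChan Ts a)]
  end.

(* Main.v *)
Require Import Defs.
From Stdlib Require Import List Permutation Relations Lia Arith.
Import ListNotations.

Section Aux.
Context {I : Type}.

Lemma peel2 (x : I * ty) Y X A B :
  Permutation (x :: Y) (X ++ [A; B]) ->
  (x = A /\ Permutation Y (X ++ [B])) \/ (x = B /\ Permutation Y (X ++ [A])) \/
  (exists X', Permutation X (x :: X') /\ Permutation Y (X' ++ [A; B])).
Proof.
  intros H.
  assert (Hin : In x (X ++ [A; B])) by (eapply Permutation_in; [exact H| left; reflexivity]).
  apply in_app_or in Hin. destruct Hin as [Hin|Hin].
  - right; right. apply in_split in Hin. destruct Hin as [X1 [X2 ->]].
    exists (X1 ++ X2). split.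
    + apply Permutation_sym, Permutation_middle.
    + rewrite <- app_assoc in H. simpl in H.
      apply Permutation_cons_app_inv in H. rewrite <- app_assoc. exact H.
  - destruct Hin as [<-|[<-|[]]].
    + left. split; [reflexivity|]. exact (Permutation_cons_app_inv X [B] H).
    + right; left. split; [reflexivity|].
      replace (X ++ [A; B]) with ((X ++ [A]) ++ B :: []) in H
        by (rewrite <- app_assoc; reflexivity).
      apply Permutation_cons_app_inv in H. rewrite app_nil_r in H. exact H.
Qed.

Lemma peel1 (x : I * ty) Y X A :
  Permutation (x :: Y) (X ++ [A]) ->
  (x = A /\ Permutation Y X) \/
  (exists X', Permutation X (x :: X') /\ Permutation Y (X' ++ [A])).
Proof.
  intros H.
  assert (Hin : In x (X ++ [A])) by (eapply Permutation_in; [exact H| left; reflexivity]).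
  apply in_app_or in Hin. destruct Hin as [Hin|Hin].
  - right. apply in_split in Hin. destruct Hin as [X1 [X2 ->]].
    exists (X1 ++ X2). split.
    + apply Permutation_sym, Permutation_middle.
    + rewrite <- app_assoc in H. simpl in H.
      apply Permutation_cons_app_inv in H. rewrite <- app_assoc. exact H.
  - destruct Hin as [<-|[]]. left. split; [reflexivity|].
    apply (Permutation_cons_app_inv X []) in H. rewrite app_nil_r in H. exact H.
Qed.

Lemma P1 (x : I * ty) Y X' B :
  Permutation Y (X' ++ [B]) -> Permutation (x :: Y) (X' ++ [x; B]).
Proof.
  intros H. eapply perm_trans; [apply perm_skip, H|].
  apply (Permutation_middle X' [B] x).
Qed.

Lemma P2 (x : I * ty) Y X' A :
  Permutation Y (X' ++ [A]) -> Permutation (x :: Y) (X' ++ [A; x]).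
Proof.
  intros H. eapply perm_trans; [apply perm_skip, H|].
  replace (X' ++ [A; x]) with ((X' ++ [A]) ++ [x]) by (rewrite <- app_assoc; reflexivity).
  apply Permutation_cons_append.
Qed.

Lemma der_perm (G E E' : env I) : derivable G E -> Permutation E E' -> derivable G E'.
Proof. intros H P. eapply rt_trans; [exact H| apply rt_step, es_perm, P]. Qed.

Lemma der_step (G E E' : env I) : derivable G E -> env_step E E' -> derivable G E'.
Proof. intros H P. eapply rt_trans; [exact H| apply rt_step, P]. Qed.

Lemma nodup_contra (G X : env I) u T T' :
  partial_fun G -> Permutation G (X ++ [(u, T); (u, T')]) -> False.
Proof.
  intros ND P. unfold partial_fun in ND.
  apply (Permutation_map fst) in P.
  apply (Permutation_NoDup P) in ND. rewrite map_app in ND. simpl in ND.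
  apply (Permutation_NoDup (Permutation_app_comm _ _)) in ND. simpl in ND.
  inversion ND; subst. apply H1. left. reflexivity.
Qed.

Lemma attr_sub_bullet c i : attr_sub c (Bullet i) -> exists k, c = Bullet k /\ k <= i.
Proof.
  intros H. remember (Bullet i) as y. revert i Heqy.
  induction H; intros i0 E; subst.
  - inversion H; subst. eexists; split; [reflexivity|lia].
  - eexists; split; [reflexivity|lia].
  - destruct (IHclos_refl_trans2 i0 eq_refl) as [k [-> Hk]].
    destruct (IHclos_refl_trans1 k eq_refl) as [k' [-> Hk']].
    eexists; split; [reflexivity|lia].
Qed.

Lemma attr_sub_aff a : attr_sub Aff a -> a = Aff.
Proof.
  intros H. remember Aff as x. revert Heqx.
  induction H; intros E; subst.
  - inversion H.
  - reflexivity.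
  - assert (y = Aff) by (apply IHclos_refl_trans1; reflexivity). subst. apply IHclos_refl_trans2; reflexivity.
Qed.

Lemma bullet_sub k i : k <= i -> attr_sub (Bullet k) (Bullet i).
Proof.
  induction 1.
  - apply rt_refl.
  - eapply rt_trans; [exact IHle| apply rt_step, Defs.le_bb].
Qed.

Definition Inv (D : env I) := forall X u Ts Ts' i a,
  Permutation D (X ++ [(u, TChan Ts (Bullet i)); (u, TChan Ts' a)]) -> a = Aff /\ i <> 0.

Lemma inv_step D0 D : env_step D0 D -> Inv D0 -> Inv D.
Proof.
  intros St IH X u Ts Ts' i a H.
  destruct St as [G0 D1 P | Y v T T1 T2 Hs | Y v T | Y v T1 T2 Hs | Y v Ts1 Ts2].
  - eapply IH. eapply perm_trans; [exact P| exact H].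
  - apply peel2 in H. destruct H as [[E H]|[[E H]|[X' [HX H]]]].
    + inversion E; subst. inversion Hs.
    + inversion E; subst. apply peel1 in H. destruct H as [[E2 H]|[X' [HX H]]].
      * inversion E2; subst. inversion Hs; subst. split; [reflexivity| lia].
      * inversion Hs; subst.
        -- destruct (IH X' u Ts Ts' i Un (P2 _ _ _ _ H)) as [C _]. discriminate.
        -- destruct (IH X' u Ts Ts' i (Bullet i0) (P2 _ _ _ _ H)) as [C _]. discriminate.
    + apply peel2 in H. destruct H as [[E H]|[[E H]|[X'' [HX' H]]]].
      * inversion E; subst. inversion Hs; subst.
        destruct (IH X' u Ts Ts' i0 a (P1 _ _ _ _ H)) as [C _]. split; [exact C| lia].
      * inversion E; subst. inversion Hs; subst.
        -- destruct (IH X' u Ts Ts' i Un (P2 _ _ _ _ H)) as [C _]. discriminate.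
        -- destruct (IH X' u Ts Ts' i (Bullet i0) (P2 _ _ _ _ H)) as [C _]. discriminate.
      * apply (IH ((v, T) :: X'') u Ts Ts'). simpl. apply perm_skip, H.
  - apply (IH ((v, T) :: X) u Ts Ts'). simpl. apply perm_skip, H.
  - inversion Hs; subst. rename Ts0 into T0.
    apply peel2 in H. destruct H as [[E H]|[[E H]|[X' [HX H]]]].
    + inversion E; subst. destruct (attr_sub_bullet _ _ H0) as [k [-> Hk]].
      destruct (IH X u Ts Ts' k a (P1 _ _ _ _ H)) as [C1 C2]. split; [exact C1| lia].
    + inversion E; subst.
      destruct (IH X u Ts Ts' i a1 (P2 _ _ _ _ H)) as [C1 C2]. subst.
      split; [apply attr_sub_aff; exact H0| exact C2].
    + apply (IH ((v, TChan T0 a1) :: X') u Ts Ts'). simpl. apply perm_skip, H.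
  - apply peel2 in H. destruct H as [[E H]|[[E H]|[X' [HX H]]]].
    + inversion E; subst.
      destruct (IH X u Ts1 Ts' 0 a (P1 _ _ _ _ H)) as [C1 C2]. lia.
    + inversion E; subst.
      destruct (IH X u Ts Ts1 i (Bullet 0) (P2 _ _ _ _ H)) as [C1 C2]. discriminate.
    + apply (IH ((v, TChan Ts1 (Bullet 0)) :: X') u Ts Ts'). simpl. apply perm_skip, H.
Qed.

Lemma inv_der G D : partial_fun G -> derivable G D -> Inv D.
Proof.
  intros PF H. apply clos_rt_rtn1 in H. induction H.
  - intros X u Ts Ts' i a P. exfalso. eapply nodup_contra; eauto.
  - eapply inv_step; eauto.
Qed.

Definition KL (G D : env I) := forall X u Ts i,
  Permutation D (X ++ [(u, TChan Ts Aff); (u, TChan Ts (Bullet (S i)))]) ->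
  derivable G (X ++ [(u, TChan Ts (Bullet i))]).

Lemma kl_step G D0 D : derivable G D0 -> Inv D0 -> KL G D0 -> env_step D0 D -> KL G D.
Proof.
  intros Hd Hinv IH St X u Ts i H.
  destruct St as [G0 D1 P | Y v T T1 T2 Hs | Y v T | Y v T1 T2 Hs | Y v Ts1 Ts2].
  - eapply IH. eapply perm_trans; [exact P| exact H].
  - apply peel2 in H. destruct H as [[E H]|[[E H]|[X' [HX H]]]].
    + inversion E; subst. apply peel1 in H. destruct H as [[E2 H]|[X' [HX H]]].
      * inversion E2; subst. inversion Hs; subst.
        eapply der_perm; [exact Hd|].
        eapply perm_trans; [apply perm_skip, H|]. apply Permutation_cons_append.
      * inversion Hs; subst.
        destruct (Hinv X' u Ts Ts (S i) (Bullet i0) (P2 _ _ _ _ H)) as [C _]. discriminate.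
    + inversion E; subst. inversion Hs.
    + apply peel2 in H. destruct H as [[E H]|[[E H]|[X'' [HX' H]]]].
      * inversion E; subst. inversion Hs.
      * inversion E; subst. inversion Hs; subst.
        eapply der_perm; [exact Hd|].
        eapply perm_trans; [|apply Permutation_cons_append].
        apply perm_skip. eapply perm_trans; [exact H|].
        eapply perm_trans; [apply Permutation_sym, Permutation_cons_append|].
        apply Permutation_sym, HX.
      * assert (Hk := IH ((v, T) :: X'') u Ts i (perm_skip _ H)).
        eapply der_step in Hk; [|apply es_contr; exact Hs].
        eapply der_perm; [exact Hk|].
        apply Permutation_sym.
        exact (Permutation_app_tail [(u, TChan Ts (Bullet i))] (perm_trans HX (perm_skip _ HX'))).
  - eapply der_step; [apply (IH ((v, T) :: X)); simpl; apply perm_skip, H| apply es_weak].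
  - inversion Hs; subst. rename Ts0 into T0.
    apply peel2 in H. destruct H as [[E H]|[[E H]|[X' [HX H]]]].
    + inversion E; subst.
      destruct (Hinv X u Ts Ts (S i) a1 (P2 _ _ _ _ H)) as [C _]. subst.
      apply IH. apply P1. exact H.
    + inversion E; subst. destruct (attr_sub_bullet _ _ H0) as [k [-> Hk]].
      destruct (Nat.eq_dec k (S i)) as [->|Hne].
      * apply IH. apply P2. exact H.
      * assert (Hd2 : derivable G ((u, TChan Ts Aff) :: (u, TChan Ts (Bullet k)) :: X)).
        { eapply der_perm; [exact Hd|].
          eapply perm_trans; [apply perm_skip, H|].
          eapply perm_trans; [apply perm_skip, Permutation_sym, Permutation_cons_append|].
          apply perm_swap. }
        eapply der_step in Hd2; [|apply es_weak].
        eapply der_step in Hd2; [|apply es_sub, subty_chan, (bullet_sub k i); lia].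
        eapply der_perm; [exact Hd2| apply Permutation_cons_append].
    + assert (Hk := IH ((v, TChan T0 a1) :: X') u Ts i (perm_skip _ H)).
      eapply der_step in Hk; [|apply es_sub, subty_chan, H0].
      eapply der_perm; [exact Hk|].
      apply Permutation_sym. exact (Permutation_app_tail [(u, TChan Ts (Bullet i))] HX).
  - apply peel2 in H. destruct H as [[E H]|[[E H]|[X' [HX H]]]].
    + inversion E.
    + inversion E.
    + assert (Hk := IH ((v, TChan Ts1 (Bullet 0)) :: X') u Ts i (perm_skip _ H)).
      eapply der_step in Hk; [|apply es_rev].
      eapply der_perm; [exact Hk|].
      apply Permutation_sym. exact (Permutation_app_tail [(u, TChan Ts (Bullet i))] HX).
Qed.

Lemma kl_der G D : partial_fun G -> derivable G D -> KL G D.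
Proof.
  intros PF H. apply clos_rt_rtn1 in H. induction H.
  - intros X u Ts i P. exfalso. eapply nodup_contra; eauto.
  - eapply kl_step; eauto.
    + apply clos_rtn1_rt; exact H0.
    + eapply inv_der; [exact PF| apply clos_rtn1_rt; exact H0].
Qed.

End Aux.

Theorem mainTheorem1 (I : Type) (G G' : env I) (u : I) (Ts : list ty)
  (a1 a2 : attr) :
  partial_fun G' ->
  derivable G' (G ++ [(u, TChan Ts a1); (u, TChan Ts a2)]) ->
  exists o1 o2,
    attr_dec a1 = Some o1 /\ attr_dec a2 = Some o2 /\
    derivable G' (ext_dec (ext_dec G u Ts o1) u Ts o2) /\
    consistent (ext_dec (ext_dec G u Ts o1) u Ts o2).
Proof.
  intros PF H.
  assert (Hi := inv_der _ _ PF H).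
  assert (Hk := kl_der _ _ PF H).
  assert (Hsw : Permutation (G ++ [(u, TChan Ts a1); (u, TChan Ts a2)])
                            (G ++ [(u, TChan Ts a2); (u, TChan Ts a1)]))
    by (apply Permutation_app_head, perm_swap).
  assert (Hi2 : Inv (G ++ [(u, TChan Ts a2); (u, TChan Ts a1)]))
    by (intros ? ? ? ? ? ? P; eapply Hi; eapply perm_trans; [exact Hsw| exact P]).
  assert (Hk2 : KL G' (G ++ [(u, TChan Ts a2); (u, TChan Ts a1)]))
    by (intros ? ? ? ? P; eapply Hk; eapply perm_trans; [exact Hsw| exact P]).
  assert (D : exists o1 o2, attr_dec a1 = Some o1 /\ attr_dec a2 = Some o2 /\
    derivable G' (ext_dec (ext_dec G u Ts o1) u Ts o2)).
  { destruct a1 as [| |i1]; destruct a2 as [| |i2].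
    - exists None, None. simpl. split; [reflexivity|split; [reflexivity|]].
      eapply der_perm in H; [|apply (Permutation_app_comm G)].
      simpl in H. eapply der_step in H; [|apply es_weak].
      eapply der_step in H; [|apply es_weak]. exact H.
    - exists None, (Some Un). simpl. split; [reflexivity|split; [reflexivity|]].
      eapply der_perm in H; [|apply Permutation_sym, (Permutation_middle G [(u, TChan Ts Un)])].
      eapply der_step in H; [|apply es_weak]. exact H.
    - destruct (Hi2 G u Ts Ts i2 Aff (Permutation_refl _)) as [_ C].
      destruct i2 as [|j]; [lia|].
      exists None, (Some (Bullet j)). simpl. split; [reflexivity|split; [reflexivity|]].
      apply (Hk G u Ts j (Permutation_refl _)).
    - exists (Some Un), None. simpl. split; [reflexivity|split; [reflexivity|]].
      replace (G ++ [(u, TChan Ts Un); (u, TChan Ts Aff)])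
        with ((G ++ [(u, TChan Ts Un)]) ++ [(u, TChan Ts Aff)]) in H
        by (rewrite <- app_assoc; reflexivity).
      eapply der_perm in H; [|apply Permutation_sym, Permutation_cons_append].
      eapply der_step in H; [|apply es_weak]. exact H.
    - exists (Some Un), (Some Un). simpl. split; [reflexivity|split; [reflexivity|]].
      rewrite <- app_assoc. exact H.
    - destruct (Hi2 G u Ts Ts i2 Un (Permutation_refl _)) as [C _]. discriminate.
    - destruct (Hi G u Ts Ts i1 Aff (Permutation_refl _)) as [_ C].
      destruct i1 as [|j]; [lia|].
      exists (Some (Bullet j)), None. simpl. split; [reflexivity|split; [reflexivity|]].
      apply (Hk2 G u Ts j (Permutation_refl _)).
    - destruct (Hi G u Ts Ts i1 Un (Permutation_refl _)) as [C _]. discriminate.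
    - destruct (Hi G u Ts Ts i1 (Bullet i2) (Permutation_refl _)) as [C _]. discriminate. }
  destruct D as [o1 [o2 [E1 [E2 Hd]]]].
  exists o1, o2. repeat split; auto. exists G'. split; assumption.
Qed.
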